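(* Let $\alpha>0$, $\beta,\eta,\kappa\in\mathbb{R}$, $\rho>0$, $p\geq 1$, and $0\le a<x$. Let $f,g$ be two positive functions on $[0,\infty)$ with $f,g\in X^{p}_{c}(a,x)$ (for some $c\in\mathbb{R}$), such that ${}^{\rho}\mathcal{I}^{\alpha,\beta}_{a+,\eta,\kappa}f^{p}(x)<\infty$ and ${}^{\rho}\mathcal{I}^{\alpha,\beta}_{a+,\eta,\kappa}g^{p}(x)<\infty$. Suppose there are real numbers $a_1,A,b_1,B$ with $0\leq a_1\leq f(t)\leq A$ and $0\leq b_1\leq g(t)\leq B$ for all $t\in[a,x]$. Then $$\left({}^{\rho}\mathcal{I}^{\alpha,\beta}_{a+,\eta,\kappa}f^{p}(x)\right)^{1/p}+\left({}^{\rho}\mathcal{I}^{\alpha,\beta}_{a+,\eta,\kappa}g^{p}(x)\right)^{1/p}\leq c_{5}\left({}^{\rho}\mathcal{I}^{\alpha,\beta}_{a+,\eta,\kappa}(f+g)^{p}(x)\right)^{1/p},$$ where $c_{5}=\frac{A(a_1+B)+B(A+b_1)}{(A+b_1)(a_1+B)}$.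
   Context: For $c\in\mathbb{R}$ and $1\le p<\infty$, $X^{p}_{c}(a,b)$ denotes the space of Lebesgue measurable functions $f$ on $(a,b)$ with $\left(\int_a^b |t^{c}f(t)|^{p}\,\frac{dt}{t}\right)^{1/p}<\infty$. For $\alpha>0$, $\beta,\eta,\kappa\in\mathbb{R}$, $\rho>0$, $0\le a<x$, and a function $\varphi$, the generalized (Katugampola) fractional integral is $${}^{\rho}\mathcal{I}^{\alpha,\beta}_{a+,\eta,\kappa}\varphi(x)=\frac{\rho^{1-\beta}x^{\kappa}}{\Gamma(\alpha)}\int_{a}^{x}\frac{\tau^{\rho(\eta+1)-1}}{(x^{\rho}-\tau^{\rho})^{1-\alpha}}\varphi(\tau)\,d\tau,$$ whenever the integral exists. Notation such as ${}^{\rho}\mathcal{I}^{\alpha,\beta}_{a+,\eta,\kappa}(f+g)^{p}(x)$ means the operator applied to $\tau\mapsto(f(\tau)+g(\tau))^p$, evaluated at $x$. *)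

(* Defs.v *)
From HB Require Import structures.
From mathcomp Require Import all_boot all_order all_algebra.
From mathcomp Require Import all_classical all_reals all_analysis.
Set Implicit Arguments. Unset Strict Implicit. Unset Printing Implicit Defensive.
Import Order.TTheory GRing.Theory Num.Theory.
Local Open Scope classical_set_scope.
Local Open Scope ring_scope.

Definition Gamma_fun (R : realType) (s : R) : R :=
  fine (\int[lebesgue_measure]_(t in `]0%R, +oo[) ((t `^ (s - 1)) * expR (- t))%:E)%E.

Definition Xpc (R : realType) (c p a b : R) (f : R -> R) : Prop :=
  measurable_fun `]a, b[ f /\
  (\int[lebesgue_measure]_(t in `]a, b[) ((`|t `^ c * f t| `^ p) / t)%:E < +oo)%E.

Definition katugampola (R : realType) (rho alpha beta eta kappa a : R)
    (phi : R -> R) (x : R) : \bar R :=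
  ((rho `^ (1 - beta) * x `^ kappa / Gamma_fun alpha)%:E *
   \int[lebesgue_measure]_(tau in `]a, x[)
      ((tau `^ (rho * (eta + 1) - 1)) * (x `^ rho - tau `^ rho) `^ (alpha - 1) * phi tau)%:E)%E.

(* Main.v *)
Require Import Defs.
From HB Require Import structures.
From mathcomp Require Import all_boot all_order all_algebra.
From mathcomp Require Import all_classical all_reals all_analysis.
From mathcomp Require Import ring lra.
Import Order.TTheory GRing.Theory Num.Theory.
Local Open Scope classical_set_scope.
Local Open Scope ring_scope.

Lemma int_le (R : realType) (D : set R) (mD : measurable D) (h1 h2 : R -> R) (k : R) :
  measurable_fun D h1 -> measurable_fun D h2 -> 0 <= k ->
  (forall t, D t -> 0 <= h1 t /\ 0 <= h2 t /\ h1 t <= k * h2 t) ->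
  (\int[lebesgue_measure]_(t in D) (h1 t)%:E <=
   k%:E * \int[lebesgue_measure]_(t in D) (h2 t)%:E)%E.
Proof.
move=> m1 m2 k0 H.
rewrite -ge0_integralZl_EFin //; last 2 first.
- by move=> t /H [_ [? _]]; rewrite lee_fin.
- exact/measurable_realfun.measurable_EFinP.
apply: ge0_le_integral => //.
- by move=> t /H [? _]; rewrite lee_fin.
- exact/measurable_realfun.measurable_EFinP.
- apply/measurable_realfun.measurable_EFinP.
  exact: measurable_realfun.measurable_funM.
- by move=> t /H [_ [_ ?]]; rewrite lee_fin.
Qed.

Lemma kat_le (R : realType) (alpha beta eta kappa rho p a x : R) (u v : R -> R) (k : R) :
  0 <= k -> 1 <= p -> 0 <= a -> a < x ->
  measurable_fun `]a, x[ u -> measurable_fun `]a, x[ v ->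
  (forall t, a < t < x -> 0 <= u t /\ 0 <= v t /\ u t <= k * v t) ->
  (poweR (katugampola rho alpha beta eta kappa a (fun t => powR (u t) p) x) p^-1
   <= k%:E * poweR (katugampola rho alpha beta eta kappa a (fun t => powR (v t) p) x) p^-1)%E.
Proof.
move=> k0 p1 a0 ax mu mv H.
have p0 : 0 < p by lra.
rewrite /katugampola.
set C := rho `^ (1 - beta) * x `^ kappa / Gamma_fun alpha.
have C0 : 0 <= C.
  rewrite /C divr_ge0 ?mulr_ge0 ?powR_ge0 // /Gamma_fun fine_ge0 //.
  apply: integral_ge0 => t _; rewrite lee_fin mulr_ge0 ?powR_ge0 ?expR_ge0 //.
set W := fun t : R => t `^ (rho * (eta + 1) - 1) * (x `^ rho - t `^ rho) `^ (alpha - 1).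
have mW : measurable_fun `]a, x[ W.
  apply: measurable_realfun.measurable_funM.
    exact: measurable_funTS (measurable_realfun.measurable_powR _).
  apply: (measurableT_comp (measurable_realfun.measurable_powR _)).
  apply: measurable_realfun.measurable_funB; first exact: measurable_cst.
  exact: measurable_funTS (measurable_realfun.measurable_powR _).
have Hint : (\int[lebesgue_measure]_(t in `]a, x[) (W t * u t `^ p)%:E <=
   (k `^ p)%:E * \int[lebesgue_measure]_(t in `]a, x[) (W t * v t `^ p)%:E)%E.
  apply: int_le => //.
  - apply: measurable_realfun.measurable_funM => //.
    exact: (measurableT_comp (measurable_realfun.measurable_powR _)).
  - apply: measurable_realfun.measurable_funM => //.
    exact: (measurableT_comp (measurable_realfun.measurable_powR _)).
  - exact: powR_ge0.
  move=> t /=; rewrite in_itv /= => /H [u0 [v0 uv]].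
  split; first by rewrite /W !mulr_ge0 ?powR_ge0.
  split; first by rewrite /W !mulr_ge0 ?powR_ge0.
  rewrite mulrCA; apply: ler_wpM2l; first by rewrite /W mulr_ge0 ?powR_ge0.
  rewrite -powRM //; apply: ge0_ler_powR; rewrite ?nnegrE ?mulr_ge0 //; lra.
have C0' : (0 <= C%:E)%E by rewrite lee_fin.
have pi0 : 0 <= p^-1 by rewrite invr_ge0 ltW.
have Iv0 : (0 <= \int[lebesgue_measure]_(t in `]a, x[) (W t * v t `^ p)%:E)%E.
  by apply: integral_ge0 => t _; rewrite lee_fin /W !mulr_ge0 ?powR_ge0.
have Iu0 : (0 <= \int[lebesgue_measure]_(t in `]a, x[) (W t * u t `^ p)%:E)%E.
  by apply: integral_ge0 => t _; rewrite lee_fin /W !mulr_ge0 ?powR_ge0.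
apply: (le_trans (gt0_ler_poweR pi0 _ _ (lee_wpmul2l C0' Hint))).
- by rewrite in_itv /= leey andbT mule_ge0.
- by rewrite in_itv /= leey andbT mule_ge0 // mule_ge0 // lee_fin powR_ge0.
rewrite muleCA (@poweRM _ (k `^ p)%:E) ?lee_fin ?powR_ge0 ?mule_ge0 //.
rewrite poweR_EFin -powRrM mulfV ?powRr1 //; lra.
Qed.

Theorem theorem13 (R : realType) (alpha beta eta kappa rho p a x c : R)
  (f g : R -> R) (a1 A b1 B : R) :
  0 < alpha -> 0 < rho -> 1 <= p -> 0 <= a -> a < x ->
  (forall t, 0 <= t -> 0 < f t) -> (forall t, 0 <= t -> 0 < g t) ->
  Xpc c p a x f -> Xpc c p a x g ->
  (katugampola rho alpha beta eta kappa a (fun t => powR (f t) p) x < +oo)%E ->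
  (katugampola rho alpha beta eta kappa a (fun t => powR (g t) p) x < +oo)%E ->
  (forall t, a <= t <= x -> 0 <= a1 <= f t /\ f t <= A) ->
  (forall t, a <= t <= x -> 0 <= b1 <= g t /\ g t <= B) ->
  let c5 := (A * (a1 + B) + B * (A + b1)) / ((A + b1) * (a1 + B)) in
  (poweR (katugampola rho alpha beta eta kappa a (fun t => powR (f t) p) x) p^-1
   + poweR (katugampola rho alpha beta eta kappa a (fun t => powR (g t) p) x) p^-1
   <= c5%:E * poweR (katugampola rho alpha beta eta kappa a (fun t => powR (f t + g t) p) x) p^-1)%E.
Proof.
move=> al0 rh0 p1 a0 ax fp gp [mf _] [mg _] _ _ Hf Hg; cbv zeta.
set c5 := ((A * (a1 + B) + B * (A + b1)) / ((A + b1) * (a1 + B))).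
have aa : a <= a <= x by apply/andP; split; lra.
have [/andP[a10 _] fA] := Hf a aa.
have [/andP[b10 _] gB] := Hg a aa.
have fa := fp a a0; have ga := gp a a0.
have A0 : 0 < A + b1 by lra.
have B0 : 0 < a1 + B by lra.
have mfg : measurable_fun `]a, x[ (fun t => f t + g t).
  exact: measurable_realfun.measurable_funD.
have Hc5 : c5 = A / (A + b1) + B / (a1 + B).
  by rewrite /c5; field; rewrite ?gt_eqF //; apply/andP; split; rewrite gt_eqF.
have k10 : 0 <= A / (A + b1) by rewrite divr_ge0 //; lra.
have k20 : 0 <= B / (a1 + B) by rewrite divr_ge0 //; lra.
rewrite Hc5 EFinD ge0_muleDl ?lee_fin //.
apply: leeD.
- apply: kat_le => // t /andP [hat htx].
  have t0 : 0 <= t by lra.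
  have ft := fp t t0; have gt := gp t t0.
  have [/andP[_ a1f] fA'] := Hf t (ltac:(apply/andP; split; lra)).
  have [/andP[_ b1g] gB'] := Hg t (ltac:(apply/andP; split; lra)).
  split; first lra. split; first lra.
  rewrite mulrAC ler_pdivlMr //. nra.
- apply: kat_le => // t /andP [hat htx].
  have t0 : 0 <= t by lra.
  have ft := fp t t0; have gt := gp t t0.
  have [/andP[_ a1f] fA'] := Hf t (ltac:(apply/andP; split; lra)).
  have [/andP[_ b1g] gB'] := Hg t (ltac:(apply/andP; split; lra)).
  split; first lra. split; first lra.
  rewrite mulrAC ler_pdivlMr //. nra.
Qed.
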